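(* For every $n\ge 6$, $\mathrm{ex}_3(n;\{P,C,P^3_2\cup K^3_3\}\mid M)=2n-4$. That is, every $n$-vertex 3-graph containing two disjoint edges and containing no copy of $P$, of $C$, or of $P^3_2\cup K^3_3$ has at most $2n-4$ edges, and this bound is attained.
   Context: All hypergraphs are 3-uniform; containment means containing an isomorphic copy. $P$ is the loose 3-uniform path of length 3: vertices $a,b,c,d,e,f,g$, edges $\{a,b,c\},\{c,d,e\},\{e,f,g\}$. $C$ is the loose triangle: vertices $x_1,x_2,x_3,y_1,y_2,y_3$, edges $\{x_1,y_3,x_2\},\{x_2,y_1,x_3\},\{x_3,y_2,x_1\}$. $M$ consists of two disjoint edges. $P^3_2$ is two edges sharing exactly one vertex; $K^3_3$ is a single edge; $P^3_2\cup K^3_3$ is their vertex-disjoint union (8 vertices, 3 edges). $\mathrm{ex}_3(n;\mathcal F\mid\mathcal G)$ is the maximum number of edges of an $n$-vertex 3-graph containing no member of $\mathcal F$ and containing some member of $\mathcal G$. *)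

(* Defs.v *)
From HB Require Import structures.
From mathcomp Require Import all_boot.
Set Implicit Arguments. Unset Strict Implicit. Unset Printing Implicit Defensive.

Definition hgraph (n : nat) := {set {set 'I_n}}.

Definition uniform3 (n : nat) (H : hgraph n) : Prop :=
  forall e, e \in H -> #|e| = 3.

Definition contains (n k : nat) (H : hgraph n) (F : hgraph k) : Prop :=
  exists f : 'I_k -> 'I_n, injective f /\ forall e, e \in F -> f @: e \in H.

Definition tri (k : nat) (a b c : nat) : {set 'I_k.+1} :=
  [set inord a; inord b; inord c].

(* Loose path of length 3: a..g = 0..6, edges abc, cde, efg. *)
Definition Ppath : hgraph 7 := [set tri 6 0 1 2; tri 6 2 3 4; tri 6 4 5 6].

(* Loose triangle: x1,x2,x3,y1,y2,y3 = 0,1,2,3,4,5;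
   edges {x1,y3,x2},{x2,y1,x3},{x3,y2,x1}. *)
Definition Ctri : hgraph 6 := [set tri 5 0 5 1; tri 5 1 3 2; tri 5 2 4 0].

Definition Mmatch : hgraph 6 := [set tri 5 0 1 2; tri 5 3 4 5].

Definition P2K3 : hgraph 8 := [set tri 7 0 1 2; tri 7 2 3 4; tri 7 5 6 7].

Definition admissible (n : nat) (H : hgraph n) : Prop :=
  [/\ uniform3 H, contains H Mmatch, ~ contains H Ppath,
      ~ contains H Ctri & ~ contains H P2K3].

(* Main.v *)
Require Import Defs.
From mathcomp Require Import all_boot zify.
From Stdlib Require Import Lia.
Set Implicit Arguments. Unset Strict Implicit. Unset Printing Implicit Defensive.

Lemma sub3 (T : finType) (h X : {set T}) : #|h| = 3 -> 3 <= #|h :&: X| -> h \subset X.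
Proof.
move=> h3 hX; apply/setIidPl/eqP; rewrite eqEcard subsetIl h3 hX.
by rewrite andbT.
Qed.

Lemma cardI_le2 (T : finType) (e f : {set T}) : #|e| = 3 -> #|f| = 3 -> e != f -> #|e :&: f| <= 2.
Proof.
move=> e3 f3 nef; rewrite leqNgt; apply/negP => H.
have H3 : #|e :&: f| = 3 by have := subset_leq_card (subsetIl e f); lia.
move/negP: nef; apply; rewrite eqEcard e3 f3 leqnn andbT.
by apply/setIidPl/eqP; rewrite eqEcard subsetIl e3 H3 leqnn.
Qed.

Lemma cov_sub (T : finType) (F : {set {set T}}) e : e \in F -> e \subset cover F.
Proof. by move=> eF; apply/subsetP => x xe; apply/bigcupP; exists e. Qed.

Lemma cov_mono (T : finType) (F G : {set {set T}}) : G \subset F -> cover G \subset cover F.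
Proof.
move=> GF; apply/subsetP => x /bigcupP [e eG xe]; apply/bigcupP; exists e => //.
exact: (subsetP GF).
Qed.

Lemma inter_big (T : finType) (g e f : {set T}) :
  #|g| = 3 -> 2 <= #|g :&: e| -> 2 <= #|g :&: f| -> #|g :&: (e :&: f)| <= 1 ->
  g \subset e :|: f.
Proof.
move=> g3 ge gf gp; apply: sub3 => //.
rewrite setIUr cardsU setIACA setIid; lia.
Qed.

Lemma famL (T : finType) (F : {set {set T}}) :
  (forall e, e \in F -> #|e| = 3) ->
  (forall e f, e \in F -> f \in F -> e != f -> 2 <= #|e :&: f|) ->
  #|F| + 2 <= #|cover F| \/ (#|F| <= 4 /\ #|F| <= #|cover F|).
Proof.
move=> U3 I2.
case: (set_0Vmem F) => [-> | [e0 e0F]].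
  by right; rewrite cards0.
have c3 : 3 <= #|cover F| by rewrite -(U3 _ e0F); apply: subset_leq_card; apply: cov_sub.
case: (boolP [exists p : {set T}, (#|p| == 2) && [forall e in F, p \subset e]]).
  case/existsP => p /andP [/eqP p2 /forall_inP pF].
  left.
  have pc : p \subset cover F by apply: subset_trans (pF _ e0F) (cov_sub e0F).
  have inj : {in F &, injective (fun e => e :\: p)}.
    move=> e f eF fF /= Def.
    by rewrite -(setID e p) -(setID f p) Def (setIidPr (pF _ eF)) (setIidPr (pF _ fF)).
  rewrite -(card_in_imset inj).
  have : [set e :\: p | e in F] \subset [set [set t] | t in cover F :\: p].
    apply/subsetP => _ /imsetP [e eF ->].
    have : #|e :\: p| == 1.
      by rewrite cardsD (setIidPr (pF _ eF)) U3 // p2.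
    case/cards1P => t et; rewrite et; apply: imset_f.
    have : t \in e :\: p by rewrite et set11.
    rewrite !inE => /andP [-> te] /=.
    by apply/bigcupP; exists e.
  move/subset_leq_card => H; apply: (leq_trans (leq_add H (leqnn 2))).
  have := leq_imset_card (fun t : T => [set t]) (cover F :\: p).
  rewrite cardsD (setIidPr pc) p2; lia.
move=> nb.
case: (leqP #|F| 3) => F3.
  by right; split; lia.
have : exists f, (f \in F) && (f != e0).
  apply/existsP; rewrite -(negbK [exists _, _]); apply/negP; rewrite negb_exists.
  move/forallP => Hf; have : F \subset [set e0].
    by apply/subsetP => x xF; rewrite inE; have := Hf x; rewrite xF /= negbK.
  move/subset_leq_card; rewrite cards1; lia.
case=> f /andP [fF fe0].
have e3 := U3 _ e0F; have f3 := U3 _ fF.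
have p2 : #|e0 :&: f| = 2.
  have fe0' : e0 != f by rewrite eq_sym.
  by have := I2 _ _ e0F fF fe0'; have := cardI_le2 e3 f3 fe0'; lia.
have [g gF pg] : exists2 g, g \in F & ~~ (e0 :&: f \subset g).
  move: nb; rewrite negb_exists => /forallP /(_ (e0 :&: f)); rewrite p2 eqxx /=.
  by case/forall_inPn => g gF pg; exists g.
have ng : forall h, h \in F -> ~~ (e0 :&: f \subset h) -> #|h :&: (e0 :&: f)| <= 1.
  move=> h hF ph; rewrite leqNgt; apply/negP => H.
  have E : h :&: (e0 :&: f) = e0 :&: f.
    apply/eqP; rewrite eqEcard subsetIr p2; have := cardI_le2 (U3 _ hF) e3; lia.
  by move/negP: ph; apply; by rewrite -E subsetIl.
have gX : g \subset e0 :|: f.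
  have ge : 2 <= #|g :&: e0|.
    apply: (I2 _ _ gF e0F); apply/eqP => E; move/negP: pg; apply; by rewrite -E subsetIl.
  have gf : 2 <= #|g :&: f|.
    apply: (I2 _ _ gF fF); apply/eqP => E; move/negP: pg; apply; by rewrite -E subsetIr.
  exact: inter_big (U3 _ gF) ge gf (ng _ gF pg).
have hX : forall h, h \in F -> h \subset e0 :|: f.
  move=> h hF; case: (boolP (e0 :&: f \subset h)) => ph; last first.
    have ge : 2 <= #|h :&: e0|.
      apply: (I2 _ _ hF e0F); apply/eqP => E; move/negP: ph; apply; by rewrite E subsetIl.
    have gf : 2 <= #|h :&: f|.
      apply: (I2 _ _ hF fF); apply/eqP => E; move/negP: ph; apply; by rewrite E subsetIr.
    exact: inter_big (U3 _ hF) ge gf (ng _ hF ph).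
  apply: sub3; first exact: (U3 _ hF).
  have hg : 2 <= #|h :&: g|.
    by apply: (I2 _ _ hF gF); apply/eqP => E; move/negP: pg; rewrite -E.
  have gp := ng _ gF pg.
  have S1 : (h :&: g) :|: (e0 :&: f) \subset h :&: (e0 :|: f).
    apply/subsetP => x; rewrite !inE => /orP [/andP [xh xg] | /andP [xe xf]].
      by rewrite xh; have := subsetP gX x xg; rewrite !inE.
    by rewrite xe (subsetP ph x) // inE xe xf.
  have := subset_leq_card S1; rewrite cardsU p2.
  have : #|h :&: g :&: (e0 :&: f)| <= #|g :&: (e0 :&: f)|.
    by apply: subset_leq_card; apply/subsetP => x; rewrite !inE => /andP [/andP [_ ->] ->].
  lia.
have X4 : #|e0 :|: f| = 4 by rewrite cardsU e3 f3 p2.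
have cX : cover F = e0 :|: f.
  apply/eqP; rewrite eqEsubset; apply/andP; split.
    by apply/subsetP => x /bigcupP [h hF xh]; apply: (subsetP (hX _ hF)).
  by rewrite subUset !cov_sub.
right; rewrite cX X4; suff : #|F| <= 4 by [].
have : F \subset [set A : {set T} | A \subset e0 :|: f & #|A| == 3].
  by apply/subsetP => h hF; rewrite inE hX //= U3.
by move/subset_leq_card; rewrite cards_draws X4.
Qed.

Lemma famQ (T : finType) (F : {set {set T}}) :
  (forall e, e \in F -> #|e| = 3) ->
  (forall e f, e \in F -> f \in F -> e != f -> #|e :&: f| != 1) ->
  #|F| <= #|cover F|.
Proof.
move=> U3 NP.
suff : forall k (G : {set {set T}}), G \subset F -> #|G| <= k -> #|G| <= #|cover G|.
  by move/(_ #|F| F (subxx _) (leqnn _)).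
elim=> [|k IH] G GF Gk.
  by move: Gk; rewrite leqn0 => /eqP ->.
case: (set_0Vmem G) => [-> | [e eG]]; first by rewrite cards0.
have e3 : #|e| = 3 by apply: U3; apply: (subsetP GF).
set G1 := [set f in G | f :&: e != set0].
set K := G :\: G1.
have G1G : G1 \subset G by apply/subsetP => f; rewrite inE => /andP [].
have ge2 : forall f, f \in G1 -> 2 <= #|f :&: e|.
  move=> f; rewrite inE => /andP [fG fe].
  case: (eqVneq f e) => [-> | nfe]; first by rewrite setIid e3.
  have := NP _ _ (subsetP GF _ fG) (subsetP GF _ eG) nfe.
  have : 0 < #|f :&: e| by rewrite card_gt0.
  lia.
have H1 : #|G1| <= #|cover G1|.
  have : #|G1| + 2 <= #|cover G1| \/ (#|G1| <= 4 /\ #|G1| <= #|cover G1|).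
    apply: famL.
      by move=> f /(subsetP G1G) /(subsetP GF); apply: U3.
    move=> f g fG1 gG1 nfg.
    have fF := subsetP GF _ (subsetP G1G _ fG1).
    have gF := subsetP GF _ (subsetP G1G _ gG1).
    have := NP _ _ fF gF nfg.
    have : 0 < #|f :&: g|.
      have := ge2 _ fG1; have := ge2 _ gG1.
      have S : (f :&: e) :|: (g :&: e) \subset e by rewrite subUset !subsetIr.
      have := subset_leq_card S; rewrite cardsU.
      have : #|f :&: e :&: (g :&: e)| <= #|f :&: g|.
        by apply: subset_leq_card; apply/subsetP => x; rewrite !inE => /andP [/andP [-> _] /andP [-> _]].
      lia.
    lia.
  lia.
have eG1 : e \in G1 by rewrite inE eG setIid -card_gt0 e3.
have KG : K \subset G by apply: subsetDl.
have cK : #|K| + #|G1| = #|G|.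
  by rewrite /K cardsD (setIidPr G1G); have := subset_leq_card G1G; lia.
have HK : #|K| <= #|cover K|.
  apply: IH; first exact: subset_trans KG GF.
  have : 0 < #|G1| by rewrite card_gt0; apply/set0Pn; exists e.
  lia.
have disj : cover G1 :&: cover K = set0.
  apply/setP => x; rewrite !inE; apply/negP => /andP [/bigcupP [f fG1 xf] /bigcupP [h hK xh]].
  move: hK; rewrite inE => /andP [hG1 hG].
  have he : h :&: e = set0 by move: hG1; rewrite inE hG /= negbK => /eqP.
  have fG := subsetP G1G _ fG1.
  have nfh : h != f by apply/eqP => E; move: hG1; rewrite E fG1.
  have := NP _ _ (subsetP GF _ hG) (subsetP GF _ fG) nfh.
  have : 0 < #|h :&: f| by rewrite card_gt0; apply/set0Pn; exists x; rewrite inE xh.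
  have : #|h :&: f| <= #|f :\: e|.
    apply: subset_leq_card; apply/subsetP => y; rewrite !inE => /andP [yh ->]; rewrite andbT.
    apply/negP => ye; have : y \in h :&: e by rewrite inE yh ye.
    by rewrite he inE.
  rewrite cardsD; have := ge2 _ fG1; rewrite (U3 _ (subsetP GF _ fG)) setIC; lia.
have : cover G1 :|: cover K \subset cover G.
  by rewrite subUset !cov_mono.
move/subset_leq_card; rewrite cardsU disj cards0.
lia.
Qed.

Lemma mk_contains n k (H : hgraph n) (F : hgraph k.+1) (s : seq 'I_n) (x0 : 'I_n) :
  uniq s -> size s = k.+1 ->
  (forall e, e \in F -> [set nth x0 s (val i) | i in e] \in H) -> contains H F.
Proof.
move=> us ss HF; exists (fun i : 'I_k.+1 => nth x0 s i); split => //.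
move=> i j /eqP; rewrite nth_uniq ?ss // => /eqP; apply: val_inj.
Qed.

Lemma tri_nth (T : finType) k (s : seq T) x0 a b c :
  a <= k -> b <= k -> c <= k ->
  [set nth x0 s (val i) | i in tri k a b c] = [set nth x0 s a; nth x0 s b; nth x0 s c].
Proof. by move=> ha hb hc; rewrite /tri !imsetU !imset_set1 /= !inordK. Qed.

Lemma set3C (T : finType) (a b c : T) : [set a; b; c] = [set b; c; a].
Proof. by apply/setP => x; rewrite !inE; case: (x == a); case: (x == b); case: (x == c). Qed.

Lemma split3a (T : finType) (e : {set T}) u v : #|e| = 3 -> u \in e -> v \in e -> u != v ->
  exists m, e = [set u; m; v].
Proof.
move=> e3 ue ve uv.
have : #|e :\ u :\ v| == 1.
  by move: e3; rewrite (cardsD1 u) (cardsD1 v (e :\ u)) ue !inE eq_sym uv ve; lia.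
case/cards1P => m Em; exists m.
apply/setP => x; rewrite !inE; apply/idP/idP.
  move=> xe; case: (eqVneq x u) => //= xu; case: (eqVneq x v) => [_|xv]; first by rewrite orbT.
  have : x \in e :\ u :\ v by rewrite !inE xu xv xe.
  by rewrite Em inE => ->.
case/orP => [/orP [/eqP -> // | xm] | /eqP -> //].
have : x \in e :\ u :\ v by rewrite Em inE.
by rewrite !inE => /and3P [].
Qed.

Lemma split3b (T : finType) (e : {set T}) u : #|e| = 3 -> u \in e ->
  exists a b, e = [set u; a; b].
Proof.
move=> e3 ue.
have : 0 < #|e :\ u| by move: e3; rewrite (cardsD1 u) ue; lia.
rewrite card_gt0 => /set0Pn [v]; rewrite !inE => /andP [vu ve].
have uv : u != v by rewrite eq_sym.
have [m ->] := split3a e3 ue ve uv; by exists m, v.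
Qed.

Lemma split3c (T : finType) (e : {set T}) : #|e| = 3 -> exists a b c, e = [set a; b; c].
Proof.
move=> e3; have : 0 < #|e| by rewrite e3.
rewrite card_gt0 => /set0Pn [u ue]; have [a [b ->]] := split3b e3 ue; by exists u, a, b.
Qed.

Lemma uniq_of_card (T : finType) (s : seq T) (X : {set T}) : X =i s -> #|X| = size s -> uniq s.
Proof. by move=> Xs cX; apply/card_uniqP; rewrite -cX; apply: eq_card => x; rewrite Xs. Qed.

Lemma in1 (T : finType) (A B : {set T}) c : A :&: B = [set c] -> c \in A /\ c \in B.
Proof. move=> E; have : c \in A :&: B by rewrite E set11. by rewrite inE => /andP. Qed.

Lemma RP n (H : hgraph n) e1 e2 e3 : e1 \in H -> e2 \in H -> e3 \in H ->
  #|e1| = 3 -> #|e2| = 3 -> #|e3| = 3 -> #|e1 :&: e2| = 1 -> #|e2 :&: e3| = 1 ->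
  e1 :&: e3 = set0 -> contains H Ppath.
Proof.
move=> H1 H2 H3 c1 c2 c3 i12 i23 i13.
have cX : #|e1 :|: e2 :|: e3| = 7.
  rewrite cardsU (cardsU e1) setIUl i13 set0U c1 c2 c3 i12 i23; done.
have /cards1P [c Ec] : #|e1 :&: e2| == 1 by rewrite i12.
have /cards1P [d Ed] : #|e2 :&: e3| == 1 by rewrite i23.
have [ce1 ce2] := in1 Ec; have [de2 de3] := in1 Ed.
have cd : c != d.
  apply/eqP => cd; have : c \in e1 :&: e3 by rewrite inE ce1 cd de3.
  by rewrite i13 inE.
have [a [b E1]] := split3b c1 ce1.
have [m E2] := split3a c2 ce2 de2 cd.
have [f [g E3]] := split3b c3 de3.
have us : uniq [:: a; b; c; m; d; f; g].
  apply: (uniq_of_card (X := e1 :|: e2 :|: e3)) => // x.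
  rewrite E1 E2 E3 !inE.
  by case: (x == a); case: (x == b); case: (x == c); case: (x == m); case: (x == d);
    case: (x == f); case: (x == g).
apply: (mk_contains (x0 := a) us) => // e.
rewrite !inE => /orP [/orP [/eqP -> | /eqP ->] | /eqP ->]; rewrite tri_nth //=.
- by rewrite -set3C -E1.
- by rewrite -E2.
- by rewrite -E3.
Qed.

Lemma RC n (H : hgraph n) e1 e2 e3 : e1 \in H -> e2 \in H -> e3 \in H ->
  #|e1| = 3 -> #|e2| = 3 -> #|e3| = 3 -> #|e1 :&: e2| = 1 -> #|e2 :&: e3| = 1 ->
  #|e3 :&: e1| = 1 -> e1 :&: e2 :&: e3 = set0 -> contains H Ctri.
Proof.
move=> H1 H2 H3 c1 c2 c3 i12 i23 i31 i123.
have cX : #|e1 :|: e2 :|: e3| = 6.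
  rewrite cardsU (cardsU e1) setIUl cardsU setIACA setIid i123 cards0 (setIC e1 e3) i31.
  by rewrite c1 c2 c3 i12 i23.
have /cards1P [x2 E12] : #|e1 :&: e2| == 1 by rewrite i12.
have /cards1P [x3 E23] : #|e2 :&: e3| == 1 by rewrite i23.
have /cards1P [x1 E31] : #|e3 :&: e1| == 1 by rewrite i31.
have [x21 x22] := in1 E12; have [x32 x33] := in1 E23; have [x13 x11] := in1 E31.
have no3 : forall x, x \in e1 -> x \in e2 -> x \in e3 -> False.
  move=> x h1 h2 h3; have : x \in e1 :&: e2 :&: e3 by rewrite !inE h1 h2 h3.
  by rewrite i123 inE.
have d12 : x1 != x2 by apply/eqP => E; apply: (no3 x1) => //; rewrite E.
have d23 : x2 != x3 by apply/eqP => E; apply: (no3 x2) => //; rewrite E.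
have d31 : x3 != x1 by apply/eqP => E; apply: (no3 x3) => //; rewrite E.
have d13 : x1 != x3 by rewrite eq_sym.
have [y3 E1] := split3a c1 x11 x21 d12.
have [y1 E2] := split3a c2 x22 x32 d23.
have [y2 E3] := split3a c3 x33 x13 d31.
have us : uniq [:: x1; x2; x3; y1; y2; y3].
  apply: (uniq_of_card (X := e1 :|: e2 :|: e3)) => // x.
  rewrite E1 E2 E3 !inE.
  by case: (x == x1); case: (x == x2); case: (x == x3); case: (x == y1); case: (x == y2);
    case: (x == y3).
apply: (mk_contains (x0 := x1) us) => // e.
rewrite !inE => /orP [/orP [/eqP -> | /eqP ->] | /eqP ->]; rewrite tri_nth //=.
- by rewrite -E1.
- by rewrite -E2.
- by rewrite -E3.
Qed.

Lemma RK n (H : hgraph n) e1 e2 e3 : e1 \in H -> e2 \in H -> e3 \in H ->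
  #|e1| = 3 -> #|e2| = 3 -> #|e3| = 3 -> #|e1 :&: e2| = 1 ->
  e1 :&: e3 = set0 -> e2 :&: e3 = set0 -> contains H P2K3.
Proof.
move=> H1 H2 H3 c1 c2 c3 i12 i13 i23.
have cX : #|e1 :|: e2 :|: e3| = 8.
  by rewrite cardsU (cardsU e1) setIUl i13 i23 setU0 cards0 c1 c2 c3 i12.
have /cards1P [c Ec] : #|e1 :&: e2| == 1 by rewrite i12.
have [ce1 ce2] := in1 Ec.
have [a [b E1]] := split3b c1 ce1.
have [m [d E2]] := split3b c2 ce2.
have [x [y [z E3]]] := split3c c3.
have us : uniq [:: a; b; c; m; d; x; y; z].
  apply: (uniq_of_card (X := e1 :|: e2 :|: e3)) => // w.
  rewrite E1 E2 E3 !inE.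
  by case: (w == a); case: (w == b); case: (w == c); case: (w == m); case: (w == d);
    case: (w == x); case: (w == y); case: (w == z).
apply: (mk_contains (x0 := a) us) => // e.
rewrite !inE => /orP [/orP [/eqP -> | /eqP ->] | /eqP ->]; rewrite tri_nth //=.
- by rewrite -set3C -E1.
- by rewrite -E2.
- by rewrite -E3.
Qed.

Lemma dj2 (T : finType) (S X Y : {set T}) : X :&: Y = set0 -> #|S :&: X| + #|S :&: Y| <= #|S|.
Proof.
move=> XY.
have : (S :&: X) :|: (S :&: Y) \subset S by rewrite subUset !subsetIl.
move/subset_leq_card; rewrite cardsU setIACA setIid XY setI0 cards0; lia.
Qed.

Lemma dj3 (T : finType) (S X Y Z : {set T}) : X :&: Y = set0 -> X :&: Z = set0 -> Y :&: Z = set0 ->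
  #|S :&: X| + #|S :&: Y| + #|S :&: Z| <= #|S|.
Proof.
move=> XY XZ YZ.
have := dj2 S (Y := Y :|: Z) (X := X); rewrite setIUr XY XZ setU0 => /(_ erefl).
rewrite setIUr cardsU setIACA setIid YZ setI0 cards0; lia.
Qed.

Lemma c0 (T : finType) (A : {set T}) : #|A| = 0 -> A = set0.
Proof. exact: cards0_eq. Qed.


Definition good n (H : hgraph n) :=
  [/\ uniform3 H, ~ contains H Ppath, ~ contains H Ctri & ~ contains H P2K3].

Lemma classify n (H : hgraph n) X Y e : good H -> X \in H -> Y \in H -> X :&: Y = set0 -> e \in H ->
  [\/ 2 <= #|e :&: X|, 2 <= #|e :&: Y| | e :&: X = set0 /\ e :&: Y = set0].
Proof.
case=> U3 nP nC nK XH YH XY eH.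
have e3 := U3 _ eH; have X3 := U3 _ XH; have Y3 := U3 _ YH.
case: (leqP 2 #|e :&: X|) => hX; first by constructor 1.
case: (leqP 2 #|e :&: Y|) => hY; first by constructor 2.
case: (posnP #|e :&: X|) => iX; case: (posnP #|e :&: Y|) => iY.
- by constructor 3; split; apply: c0.
- case: nK; apply: (RK eH YH XH) => //; first lia.
  + exact: c0.
  + by rewrite setIC.
- case: nK; apply: (RK eH XH YH) => //; first lia.
  exact: c0.
- case: nP; apply: (RP XH eH YH) => //; rewrite ?(setIC X); lia.
Qed.

Lemma twoint n (H : hgraph n) X Y e f : good H -> X \in H -> Y \in H -> X :&: Y = set0 ->
  e \in H -> f \in H -> 2 <= #|e :&: X| -> 2 <= #|f :&: X| -> e != f -> 2 <= #|e :&: f|.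
Proof.
case=> U3 nP nC nK XH YH XY eH fH eX fX ef.
have e3 := U3 _ eH; have f3 := U3 _ fH; have X3 := U3 _ XH; have Y3 := U3 _ YH.
have efX : 1 <= #|e :&: f :&: X|.
  have : (e :&: X) :|: (f :&: X) \subset X by rewrite subUset !subsetIr.
  move/subset_leq_card; rewrite cardsU.
  have : #|e :&: X :&: (f :&: X)| = #|e :&: f :&: X| by rewrite setIACA setIid.
  lia.
have ef1 : #|e :&: f :&: X| <= #|e :&: f| by apply: subset_leq_card; apply: subsetIl.
rewrite leqNgt; apply/negP => H1.
have i1 : #|e :&: f| = 1 by lia.
have := dj2 e XY; have := dj2 f XY; rewrite e3 f3 => hf he.
have i1' : #|f :&: e| = 1 by rewrite setIC.
case: (posnP #|e :&: Y|) => iY; case: (posnP #|f :&: Y|) => jY.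
- by case: nK; apply: (RK eH fH YH) => //; apply: c0.
- have fY : #|f :&: Y| = 1 by lia.
  by case: nP; apply: (RP eH fH YH e3 f3 Y3 i1 fY (c0 iY)).
- have eY : #|e :&: Y| = 1 by lia.
  by case: nP; apply: (RP fH eH YH f3 e3 Y3 i1' eY (c0 jY)).
- have fY : #|f :&: Y| = 1 by lia.
  have eY : #|Y :&: e| = 1 by rewrite setIC; lia.
  case: nC; apply: (RC eH fH YH e3 f3 Y3 i1 fY eY).
  have := dj2 (e :&: f) XY => h; apply: c0; lia.
Qed.

Lemma noXmeetZ n (H : hgraph n) X Y Z e : good H -> X \in H -> Y \in H -> Z \in H ->
  X :&: Y = set0 -> X :&: Z = set0 -> Y :&: Z = set0 -> e \in H -> 2 <= #|e :&: X| ->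
  e :&: Z = set0.
Proof.
case=> U3 nP nC nK XH YH ZH XY XZ YZ eH eX.
have := dj3 e XY XZ YZ; rewrite (U3 _ eH) => h.
case: (posnP #|e :&: Z|) => iZ; first exact: c0.
case: nK; apply: (RK eH ZH YH (U3 _ eH) (U3 _ ZH) (U3 _ YH)); first lia.
  apply: c0; lia.
by rewrite setIC.
Qed.

Lemma mixed n (H : hgraph n) X Y e f : good H -> X \in H -> Y \in H -> X :&: Y = set0 ->
  e \in H -> f \in H -> 2 <= #|e :&: X| -> f :&: X = set0 -> f :&: Y = set0 ->
  #|e :&: f| = 1 -> False.
Proof.
move=> G; have [U3 nP nC nK] := G; move=> XH YH XY eH fH eX fX fY ef.
have := dj3 e XY (Z := f); rewrite setIC fX setIC fY (U3 _ eH) => /(_ erefl erefl) h.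
case: nK; apply: (RK eH fH YH (U3 _ eH) (U3 _ fH) (U3 _ YH) ef) => //.
apply: c0; lia.
Qed.

Lemma mAB n (H : hgraph n) X Y Z e f : good H -> X \in H -> Y \in H -> Z \in H ->
  X :&: Y = set0 -> X :&: Z = set0 -> Y :&: Z = set0 -> e \in H -> f \in H ->
  2 <= #|e :&: X| -> 2 <= #|f :&: Y| -> #|e :&: f| = 1 -> False.
Proof.
move=> G; have [U3 nP nC nK] := G; move=> XH YH ZH XY XZ YZ eH fH eX fY ef.
have eZ := noXmeetZ G XH YH ZH XY XZ YZ eH eX.
have YX : Y :&: X = set0 by rewrite setIC.
have fZ := noXmeetZ G YH XH ZH YX YZ XZ fH fY.
by case: nK; apply: (RK eH fH ZH (U3 _ eH) (U3 _ fH) (U3 _ ZH) ef).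
Qed.

Lemma upper_gen n (H : hgraph n) A B : 6 <= n -> good H -> A \in H -> B \in H -> A :&: B = set0 ->
  #|H| <= 2 * n - 4.
Proof.
move=> n6 G AH BH AB; have [U3 nP nC nK] := G.
have BA : B :&: A = set0 by rewrite setIC.
have cov_n : forall F : {set {set 'I_n}}, #|cover F| <= n.
  by move=> F; have := max_card (mem (cover F)); rewrite card_ord.
set HA := [set e in H | 2 <= #|e :&: A|].
set HB := [set e in H | 2 <= #|e :&: B|].
have bnd : forall X Y, X \in H -> Y \in H -> X :&: Y = set0 ->
    #|[set e in H | 2 <= #|e :&: X|]| <= n - 2.
  move=> X Y XH YH XY.
  have := famL (F := [set e in H | 2 <= #|e :&: X|]).
  case.
  - by move=> e; rewrite inE => /andP [eH _]; apply: U3.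
  - move=> e f; rewrite !inE => /andP [eH eX] /andP [fH fX] ef.
    exact: (twoint G XH YH XY eH fH eX fX ef).
  - by have := cov_n [set e in H | 2 <= #|e :&: X|]; lia.
  - by lia.
have hA := bnd _ _ AH BH AB; have hB := bnd _ _ BH AH BA.
case: (boolP [exists D in H, (D :&: A == set0) && (D :&: B == set0)]).
  case/exists_inP => D DH /andP [/eqP DA /eqP DB].
  have AD : A :&: D = set0 by rewrite setIC.
  have BD : B :&: D = set0 by rewrite setIC.
  have : #|H| <= #|cover H|.
    apply: famQ => // e f eH fH ef; apply/eqP => i1.
    have i1' : #|f :&: e| = 1 by rewrite setIC.
    have fe : f != e by rewrite eq_sym.
    case: (classify G AH BH AB eH) => [eA | eB | [eA eB]];
    case: (classify G AH BH AB fH) => [fA | fB | [fA fB]].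
    - by have := twoint G AH BH AB eH fH eA fA ef; lia.
    - exact: (mAB G AH BH DH AB AD BD eH fH eA fB i1).
    - exact: (mixed G AH BH AB eH fH eA fA fB i1).
    - exact: (mAB G AH BH DH AB AD BD fH eH fA eB i1').
    - by have := twoint G BH AH BA eH fH eB fB ef; lia.
    - exact: (mixed G BH AH BA eH fH eB fB fA i1).
    - exact: (mixed G AH BH AB fH eH fA eA eB i1').
    - exact: (mixed G BH AH BA fH eH fB eB eA i1').
    - by case: nK; apply: (RK eH fH AH (U3 _ eH) (U3 _ fH) (U3 _ AH) i1 eA fA).
  have := cov_n H; lia.
rewrite negb_exists_in => /forall_inP nD.
have : H \subset HA :|: HB.
  apply/subsetP => e eH; rewrite !inE eH /=.
  case: (classify G AH BH AB eH) => [-> // | -> | [eA eB]]; first by rewrite orbT.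
  by have := nD _ eH; rewrite eA eB eqxx.
move/subset_leq_card; rewrite cardsU => h.
have : #|HA| + #|HB| <= 2 * n - 4 by move: hA hB; rewrite -/HA -/HB; lia.
lia.
Qed.

Lemma eq_inord k (x : 'I_k.+1) i : i <= k -> (x == inord i) = (val x == i).
Proof. by move=> ik; rewrite -(inj_eq val_inj) /= inordK. Qed.

Ltac trismall p :=
  apply: (@leq_trans #|[set (inord p : 'I__)]|); last (by rewrite cards1);
  apply: subset_leq_card; apply/subsetP;
  case => [[|[|[|[|[|[|[|[|m]]]]]]]] Hm]; rewrite !inE !eq_inord //=.

Lemma ti1 : #|tri 6 0 1 2 :&: tri 6 2 3 4| <= 1. Proof. trismall 2. Qed.
Lemma ti2 : #|tri 6 2 3 4 :&: tri 6 4 5 6| <= 1. Proof. trismall 4. Qed.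
Lemma ti3 : #|tri 6 0 1 2 :&: tri 6 4 5 6| <= 1. Proof. trismall 0. Qed.
Lemma tc1 : #|tri 5 0 5 1 :&: tri 5 1 3 2| <= 1. Proof. trismall 1. Qed.
Lemma tc2 : #|tri 5 1 3 2 :&: tri 5 2 4 0| <= 1. Proof. trismall 2. Qed.
Lemma tc3 : #|tri 5 0 5 1 :&: tri 5 2 4 0| <= 1. Proof. trismall 0. Qed.
Lemma tk1 : #|tri 7 0 1 2 :&: tri 7 2 3 4| <= 1. Proof. trismall 2. Qed.
Lemma tk2 : #|tri 7 2 3 4 :&: tri 7 5 6 7| <= 1. Proof. trismall 0. Qed.
Lemma tk3 : #|tri 7 0 1 2 :&: tri 7 5 6 7| <= 1. Proof. trismall 0. Qed.
Lemma tm : tri 5 0 1 2 :&: tri 5 3 4 5 = set0.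
Proof.
apply/setP => x; rewrite !inE !eq_inord //.
by case: x => [[|[|[|[|[|[|m]]]]]] Hm].
Qed.

Lemma same2 (T : finType) (P e f : {set T}) : #|P| = 2 -> P \subset e -> P \subset f -> 2 <= #|e :&: f|.
Proof. by move=> P2 Pe Pf; rewrite -P2; apply: subset_leq_card; rewrite subsetI Pe Pf. Qed.

Lemma tdiff n (H0 : hgraph n) (P1 P2 : {set 'I_n}) e f :
  #|P1| = 2 -> #|P2| = 2 -> (forall e, e \in H0 -> P1 \subset e \/ P2 \subset e) ->
  e \in H0 -> f \in H0 -> #|e :&: f| <= 1 -> (P1 \subset e) != (P1 \subset f).
Proof.
move=> c1 c2 typ eH fH ef.
case: (boolP (P1 \subset e)) => Pe; case: (boolP (P1 \subset f)) => Pf //.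
  by have := same2 c1 Pe Pf; lia.
have [Pe'|Pe'] := typ _ eH; first by rewrite Pe' in Pe.
have [Pf'|Pf'] := typ _ fH; first by rewrite Pf' in Pf.
by have := same2 c2 Pe' Pf'; lia.
Qed.

Lemma nocontain3 n k (H0 : hgraph n) (P1 P2 : {set 'I_n}) (F : hgraph k) t1 t2 t3 :
  #|P1| = 2 -> #|P2| = 2 -> (forall e, e \in H0 -> P1 \subset e \/ P2 \subset e) ->
  t1 \in F -> t2 \in F -> t3 \in F ->
  #|t1 :&: t2| <= 1 -> #|t2 :&: t3| <= 1 -> #|t1 :&: t3| <= 1 -> ~ contains H0 F.
Proof.
move=> c1 c2 typ T1 T2 T3 i12 i23 i13 [g [ginj gF]].
have ci : forall s t : {set 'I_k}, #|g @: s :&: g @: t| = #|s :&: t|.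
  by move=> s t; rewrite -imsetI ?card_imset //; move=> x y _ _; apply: ginj.
have d12 : (P1 \subset g @: t1) != (P1 \subset g @: t2).
  by apply: (tdiff c1 c2 typ (gF _ T1) (gF _ T2)); rewrite ci.
have d23 : (P1 \subset g @: t2) != (P1 \subset g @: t3).
  by apply: (tdiff c1 c2 typ (gF _ T2) (gF _ T3)); rewrite ci.
have d13 : (P1 \subset g @: t1) != (P1 \subset g @: t3).
  by apply: (tdiff c1 c2 typ (gF _ T1) (gF _ T3)); rewrite ci.
move: d12 d23 d13.
by case: (P1 \subset g @: t1); case: (P1 \subset g @: t2); case: (P1 \subset g @: t3).
Qed.

Lemma card3 (T : finType) (u w x : T) : u != w -> x \notin [set u; w] -> #|[set u; w; x]| = 3.
Proof.
move=> uw xn; have -> : [set u; w; x] = x |: [set u; w] by rewrite setUC.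
by rewrite cardsU1 xn cards2 uw.
Qed.

Definition book n (u w : 'I_n) : hgraph n := [set [set u; w; x] | x in ~: [set u; w]].

Lemma book_card n (u w : 'I_n) : u != w -> #|book u w| = n - 2.
Proof.
move=> uw; rewrite /book card_in_imset.
  by have := cardsC [set u; w]; rewrite cards2 uw card_ord; lia.
move=> x y; rewrite !inE !negb_or => /andP [xu xw] /andP [yu yw] E.
have : x \in [set u; w; y] by rewrite -E !inE eqxx orbT.
by rewrite !inE (negbTE xu) (negbTE xw) => /eqP.
Qed.

Lemma book_mem n (u w : 'I_n) e : u != w -> e \in book u w -> #|e| = 3 /\ [set u; w] \subset e.
Proof.
move=> uw; case/imsetP => x xn ->; split.
  by apply: card3 => //; move: xn; rewrite inE.
by apply/subsetP => y; rewrite !inE => ->.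
Qed.

Lemma lower n : 6 <= n -> exists H : hgraph n, admissible H /\ #|H| = 2 * n - 4.
Proof.
move=> n6.
pose v (k : nat) : 'I_n := widen_ord n6 (inord k : 'I_6).
have vv : forall i j, i <= 5 -> j <= 5 -> (v i == v j) = (i == j).
  by move=> i j hi hj; rewrite -(inj_eq val_inj) /= !inordK.
have v01 : v 0 != v 1 by rewrite vv.
have v34 : v 3 != v 4 by rewrite vv.
exists (book (v 0) (v 1) :|: book (v 3) (v 4)).
have typ : forall e, e \in book (v 0) (v 1) :|: book (v 3) (v 4) ->
    [set v 0; v 1] \subset e \/ [set v 3; v 4] \subset e.
  by move=> e; case/setUP => [/(book_mem v01) [_ ->] | /(book_mem v34) [_ ->]]; [left | right].
have c1 : #|[set v 0; v 1]| = 2 by rewrite cards2 v01.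
have c2 : #|[set v 3; v 4]| = 2 by rewrite cards2 v34.
have AB : [set v 0; v 1] :&: [set v 3; v 4] = set0.
  by apply/setP => x; rewrite !inE; apply/negP => /andP [/orP [/eqP -> | /eqP ->]]; rewrite !vv.
have dis : book (v 0) (v 1) :&: book (v 3) (v 4) = set0.
  apply/setP => e; rewrite !inE; apply/negP => /andP [/(book_mem v01) [_ s1] /(book_mem v34) [e3 s2]].
  have : [set v 0; v 1] :|: [set v 3; v 4] \subset e by rewrite subUset s1 s2.
  by move/subset_leq_card; rewrite cardsU AB cards0 c1 c2 e3.
split; last first.
  by rewrite cardsU dis cards0 !book_card //; lia.
split.
- by move=> e /setUP [/(book_mem v01) [] | /(book_mem v34) []].
- exists (widen_ord n6); split.
    by move=> i j /(congr1 val) /= /val_inj.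
  move=> e; rewrite !inE => /orP [] /eqP ->; rewrite /tri !imsetU !imset_set1; apply/orP.
    left; apply/imsetP; exists (v 2); first by rewrite !inE !vv.
    done.
  right; apply/imsetP; exists (v 5); first by rewrite !inE !vv.
  done.
- apply: (nocontain3 (t1 := tri 6 0 1 2) (t2 := tri 6 2 3 4) (t3 := tri 6 4 5 6) c1 c2 typ);
    rewrite ?ti1 ?ti2 ?ti3 // !inE eqxx ?orbT //.
- apply: (nocontain3 (t1 := tri 5 0 5 1) (t2 := tri 5 1 3 2) (t3 := tri 5 2 4 0) c1 c2 typ);
    rewrite ?tc1 ?tc2 ?tc3 // !inE eqxx ?orbT //.
- apply: (nocontain3 (t1 := tri 7 0 1 2) (t2 := tri 7 2 3 4) (t3 := tri 7 5 6 7) c1 c2 typ);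
    rewrite ?tk1 ?tk2 ?tk3 // !inE eqxx ?orbT //.
Qed.

Theorem mainTheorem7 (n : nat) : 6 <= n ->
  (forall H : hgraph n, admissible H -> #|H| <= 2 * n - 4) /\
  (exists H : hgraph n, admissible H /\ #|H| = 2 * n - 4).
Proof.
move=> n6; split; last exact: lower.
move=> H [U3 [g [ginj gM]] nP nC nK].
have G : good H by [].
apply: (upper_gen (A := g @: tri 5 0 1 2) (B := g @: tri 5 3 4 5) n6 G).
- by apply: gM; rewrite !inE eqxx.
- by apply: gM; rewrite !inE eqxx orbT.
- by rewrite -imsetI ?tm ?imset0 //; move=> x y _ _; apply: ginj.
Qed.
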